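(* Let $(A,\diamond,\circ,\lambda)$ be a left semi-truss such that $(A,\circ)$ is a group and $(A,\diamond)$ is a left cancellative semigroup with an idempotent $e$. Define $\sigma:A\to A$ by $\sigma(a)=a\circ e$. Then $\sigma$ is bijective, and with the binary operation $a\bullet b:=\sigma\big(\sigma^{-1}(a)\circ\sigma^{-1}(b)\big)$, the triple $(A,\diamond,\bullet)$ is a left semi-brace.
   Context: A left semi-truss $(A,\diamond,\circ,\lambda)$ is a set $A$ with two associative binary operations $\diamond,\circ$ and a function $\lambda:A\times A\to A$ such that $a\circ(b\diamond c)=(a\circ b)\diamond\lambda(a,c)$ for all $a,b,c\in A$. A semigroup $(A,\diamond)$ is left cancellative if $a\diamond b=a\diamond c$ implies $b=c$. A (left) semi-brace is a set $A$ with binary operations $\diamond,\bullet$ such that $(A,\diamond)$ is a left cancellative semigroup, $(A,\bullet)$ is a group, and $a\bullet(b\diamond c)=(a\bullet b)\diamond\big(a\bullet(a^\bullet\diamond c)\big)$ for all $a,b,c\in A$, where $a^\bullet$ is the inverse of $a$ in $(A,\bullet)$. *)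

(* Defs.v *)
From mathcomp Require Import all_boot.
Set Implicit Arguments. Unset Strict Implicit. Unset Printing Implicit Defensive.

Definition is_left_semi_truss (A : Type) (dia circ : A -> A -> A)
    (lam : A -> A -> A) : Prop :=
  associative dia /\ associative circ /\
  (forall a b c, circ a (dia b c) = dia (circ a b) (lam a c)).

Definition left_cancellative_semigroup (A : Type) (op : A -> A -> A) : Prop :=
  associative op /\ (forall a b c, op a b = op a c -> b = c).

Definition is_group_with (A : Type) (op : A -> A -> A) (u : A) (inv : A -> A)
    : Prop :=
  associative op /\ left_id u op /\ right_id u op /\
  (forall a, op a (inv a) = u) /\ (forall a, op (inv a) a = u).

Definition is_group (A : Type) (op : A -> A -> A) : Prop :=
  exists u inv, @is_group_with A op u inv.

Definition is_left_semi_brace (A : Type) (dia bul : A -> A -> A) : Prop :=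
  left_cancellative_semigroup dia /\
  exists u inv, @is_group_with A bul u inv /\
    (forall a b c, bul a (dia b c) = dia (bul a b) (bul a (dia (inv a) c))).

(* Main.v *)
Require Import Defs.
From mathcomp Require Import all_boot.

Theorem proposition2p5 (A : Type) (dia circ lam : A -> A -> A) (e : A) :
  is_left_semi_truss dia circ lam ->
  is_group circ ->
  left_cancellative_semigroup dia ->
  dia e e = e ->
  let sigma := fun a => circ a e in
  bijective sigma /\
  (forall sigma_inv : A -> A,
     cancel sigma sigma_inv -> cancel sigma_inv sigma ->
     is_left_semi_brace dia
       (fun a b => sigma (circ (sigma_inv a) (sigma_inv b)))).
Proof.
move=> [dA [cA tr]] [u [inv [_ [cl [cr [cv cvl]]]]]] [_ canc] ee sigma.
set ei := inv e.
have sK : forall a, circ (circ a e) ei = a by move=> a; rewrite -cA cv cr.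
have sK' : forall a, circ (circ a ei) e = a by move=> a; rewrite -cA cvl cr.
split; first by exists (fun a => circ a ei) => a; [exact: sK|exact: sK'].
move=> si h1 h2.
have hsi : forall a, si a = circ a ei.
  by move=> a; rewrite -{1}(sK' a); exact: h1.
have bul : forall a b, sigma (circ (si a) (si b)) = circ (circ a ei) b.
  by move=> a b; rewrite /sigma !hsi -!cA cvl cr.
have eL : forall z, dia e z = z.
  by move=> z; apply: (canc e); rewrite dA ee.
split; first by split.
exists e, (fun a => circ (circ e (inv a)) e); split.
  split; [|split; [|split; [|split]]].
  - move=> a b c; rewrite !bul; by rewrite -!cA.
  - by move=> a; rewrite bul /ei cv cl.
  - by move=> a; rewrite bul -cA cvl cr.
  - by move=> a; rewrite bul -!cA (cA ei) cvl cl cA cv cl.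
  - by move=> a; rewrite bul -!cA (cA e ei) /ei cv cl cvl cr.
move=> a b c; rewrite !bul.
set x := circ a ei.
have hx : circ x (circ (circ e (inv a)) e) = e.
  by rewrite /x -!cA (cA ei) cvl cl cA cv cl.
rewrite !tr hx.
by rewrite eL.
Qed.
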